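(* Let $\mathcal{A}$ be a unital C*-algebra and $X$ a Hilbert $\mathcal{A}$-bimodule, full and finite projective as a right $\mathcal{A}$-module, with finite basis $\{u_1,\dots,u_n\}$, and let $\sigma:\mathcal{O}_X\to\mathcal{O}_X$, $\sigma(T)=\sum_iu_iTu_i^*$. Then the restriction of $\sigma$ to $\mathcal{A}'\cap\mathcal{O}_X$ is a unital injective $*$-homomorphism, and this restriction does not depend on the choice of the basis of $X_{\mathcal{A}}$.
   Context: A Hilbert $\mathcal{A}$-bimodule is a right Hilbert $\mathcal{A}$-module $X$ (inner product $(\cdot|\cdot)_{\mathcal{A}}$) with an injective $*$-homomorphism $\phi:\mathcal{A}\to\mathcal{L}_{\mathcal{A}}(X_{\mathcal{A}})$. A basis is a finite set $\{u_i\}\subset X$ with $x=\sum_iu_i(u_i|x)_{\mathcal{A}}$ for all $x\in X$. $\mathcal{O}_X$ is the universal C*-algebra generated by a unital copy of $\mathcal{A}$ and elements $S_x$ ($x\in X$, linear in $x$) with $S_{xa}=S_xa$, $S_{\phi(a)x}=aS_x$, $S_x^*S_y=(x|y)_{\mathcal{A}}$, $\sum_iS_{u_i}S_{u_i}^*=I$; write $x$ for $S_x$. $\mathcal{A}'$ is the commutant of $\mathcal{A}$ in $\mathcal{O}_X$. *)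

(* Defs.v *)
From HB Require Import structures.
From mathcomp Require Import all_boot all_order all_algebra.
From mathcomp Require Import reals.
From mathcomp.real_closed Require Import complex.
Set Implicit Arguments. Unset Strict Implicit. Unset Printing Implicit Defensive.
Import Order.TTheory GRing.Theory Num.Theory.
Local Open Scope ring_scope.

Section CStar.
Variable R : realType.
Local Notation C := R[i].
Local Notation "x %:CC" := (real_complex R x) (at level 2, format "x %:CC").

Definition is_cstar_alg (A : algType C) (star : A -> A) (nrm : A -> R) : Prop :=
  (
      (forall x y, star (x + y) = star x + star y) /\
      (forall (c : C) x, star (c *: x) = c^* *: star x) /\
      (forall x y, star (x * y) = star y * star x) /\
      (forall x, star (star x) = x) /\
      (forall x, 0 <= nrm x) /\ (forall x, nrm x = 0 -> x = 0) /\
      (forall x y, nrm (x + y) <= nrm x + nrm y) /\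
      (forall (c : C) x, (nrm (c *: x))%:CC = `|c| * (nrm x)%:CC) /\
      (forall x y, nrm (x * y) <= nrm x * nrm y) /\
      (forall x, nrm (star x * x) = nrm x ^+ 2) /\
      (forall u : nat -> A,
        (forall e : R, 0 < e -> exists N, forall m n, (N <= m)%N -> (N <= n)%N ->
            nrm (u m - u n) < e) ->
        exists l, forall e : R, 0 < e -> exists N, forall n, (N <= n)%N ->
            nrm (u n - l) < e)).

Definition is_star_hom (A B : algType C) (sA : A -> A) (sB : B -> B) (f : A -> B) :=
  [/\ (forall x y, f (x + y) = f x + f y),
      (forall (c : C) x, f (c *: x) = c *: f x),
      (forall x y, f (x * y) = f x * f y),
      (forall x, f (sA x) = sB (f x)) &
      f 1 = 1].

(* X is a complex vector space with a right A-action [act] and an A-valued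
   inner product [ip] ((x|y)_A = ip x y, linear in the second variable),
   complete for the norm ||x|| = ||(x|x)_A||^(1/2). *)
Definition is_hilbert_module (A : algType C) (sA : A -> A) (nA : A -> R)
    (X : lmodType C) (act : X -> A -> X) (ip : X -> X -> A) : Prop :=
  (
      (forall x y a, act (x + y) a = act x a + act y a) /\
      (forall x a b, act x (a + b) = act x a + act x b) /\
      (forall x a b, act (act x a) b = act x (a * b)) /\ (forall x, act x 1 = x) /\
      (forall (c : C) x a, act (c *: x) a = c *: act x a /\ act x (c *: a) = c *: act x a) /\
      (forall x y z, ip x (y + z) = ip x y + ip x z) /\
      (forall (c : C) x y, ip x (c *: y) = c *: ip x y) /\
      (forall x y a, ip x (act y a) = ip x y * a) /\ (forall x y, sA (ip x y) = ip y x) /\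
      (forall x, exists b, ip x x = sA b * b) /\ (forall x, ip x x = 0 -> x = 0) /\
      (forall u : nat -> X,
        (forall e : R, 0 < e -> exists N, forall m n, (N <= m)%N -> (N <= n)%N ->
            nA (ip (u m - u n) (u m - u n)) < e) ->
        exists l, forall e : R, 0 < e -> exists N, forall n, (N <= n)%N ->
            nA (ip (u n - l) (u n - l)) < e)).

Definition adjoint_of (A : algType C) (X : lmodType C) (ip : X -> X -> A)
    (T T' : X -> X) : Prop :=
  forall x y, ip (T x) y = ip x (T' y).

Definition adjointable (A : algType C) (X : lmodType C) (ip : X -> X -> A)
    (T : X -> X) : Prop := exists T', adjoint_of ip T T'.

Definition is_left_action (A : algType C) (sA : A -> A) (X : lmodType C)
    (ip : X -> X -> A) (phi : A -> X -> X) : Prop :=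
  ( (forall a, adjointable ip (phi a)) /\
      (forall a b x, phi (a + b) x = phi a x + phi b x) /\
      (forall (c : C) a x, phi (c *: a) x = c *: phi a x) /\
      (forall a b x, phi (a * b) x = phi a (phi b x)) /\
      (forall a, adjoint_of ip (phi a) (phi (sA a))) /\
      (forall a b, (forall x, phi a x = phi b x) -> a = b)).

Definition is_hilbert_bimodule (A : algType C) (sA : A -> A) (nA : A -> R)
    (X : lmodType C) (act : X -> A -> X) (ip : X -> X -> A) (phi : A -> X -> X) :=
  is_hilbert_module sA nA act ip /\ is_left_action sA ip phi.

Definition full (A : algType C) (nA : A -> R) (X : lmodType C)
    (ip : X -> X -> A) : Prop :=
  forall (a : A) (e : R), 0 < e ->
    exists s : seq (C * X * X),
      nA (a - \sum_(t <- s) t.1.1 *: ip t.1.2 t.2) < e.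

Definition is_basis (A : algType C) (X : lmodType C) (act : X -> A -> X)
    (ip : X -> X -> A) (n : nat) (u : 'I_n -> X) : Prop :=
  forall x, x = \sum_(i < n) act (u i) (ip (u i) x).

Inductive gen_by (A : algType C) (X : lmodType C) (O : algType C) (sO : O -> O)
    (iota : A -> O) (S : X -> O) : O -> Prop :=
  | gen_A a : gen_by sO iota S (iota a)
  | gen_S x : gen_by sO iota S (S x)
  | gen_add s t : gen_by sO iota S s -> gen_by sO iota S t -> gen_by sO iota S (s + t)
  | gen_scale (c : C) t : gen_by sO iota S t -> gen_by sO iota S (c *: t)
  | gen_mul s t : gen_by sO iota S s -> gen_by sO iota S t -> gen_by sO iota S (s * t)
  | gen_star t : gen_by sO iota S t -> gen_by sO iota S (sO t).

Definition OX_relations (A : algType C) (sA : A -> A) (X : lmodType C)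
    (act : X -> A -> X) (ip : X -> X -> A) (phi : A -> X -> X)
    (n : nat) (u : 'I_n -> X)
    (B : algType C) (sB : B -> B) (rho : A -> B) (T : X -> B) : Prop :=
  ( is_star_hom sA sB rho /\
      (forall x y, T (x + y) = T x + T y) /\ (forall (c : C) x, T (c *: x) = c *: T x) /\
      (forall x a, T (act x a) = T x * rho a) /\
      (forall x a, T (phi a x) = rho a * T x) /\
      (forall x y, sB (T x) * T y = rho (ip x y)) /\
      \sum_(i < n) T (u i) * sB (T (u i)) = 1).

Definition is_OX (A : algType C) (sA : A -> A) (X : lmodType C)
    (act : X -> A -> X) (ip : X -> X -> A) (phi : A -> X -> X)
    (n : nat) (u : 'I_n -> X)
    (O : algType C) (sO : O -> O) (nO : O -> R) (iota : A -> O) (S : X -> O) : Prop :=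
  [/\ is_cstar_alg sO nO,
      OX_relations sA act ip phi u sO iota S,
      (forall (t : O) (e : R), 0 < e -> exists g, gen_by sO iota S g /\ nO (t - g) < e) &
      (forall (B : algType C) (sB : B -> B) (nB : B -> R) (rho : A -> B) (T : X -> B),
         is_cstar_alg sB nB -> OX_relations sA act ip phi u sB rho T ->
         exists Psi : O -> B, is_star_hom sO sB Psi /\
           (forall a, Psi (iota a) = rho a) /\ (forall x, Psi (S x) = T x))].

(* sigma(T) = sum_i u_i T u_i^*  (u_i identified with S_{u_i}) *)
Definition sigma (X : lmodType C) (O : algType C) (sO : O -> O) (S : X -> O)
    (n : nat) (u : 'I_n -> X) (t : O) : O :=
  \sum_(i < n) S (u i) * t * sO (S (u i)).

Definition in_commutant (A : algType C) (O : algType C) (iota : A -> O) (t : O) : Prop :=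
  forall a, iota a * t = t * iota a.

End CStar.

(* Main.v *)
Require Import Defs.
From HB Require Import structures.
From mathcomp Require Import all_boot all_order all_algebra.
From mathcomp Require Import reals.
From mathcomp.real_closed Require Import complex.
From mathcomp Require Import ring lra.
Set Implicit Arguments. Unset Strict Implicit. Unset Printing Implicit Defensive.
Import Order.TTheory GRing.Theory Num.Theory.
Local Open Scope ring_scope.

Lemma small_pow (R : realType) (r : R) : 0 <= r -> r <= 2^-1 ->
  forall e : R, 0 < e -> exists N, forall n, (N <= n)%N -> r ^+ n < e.
Proof.
move=> r0 r2 e e0.
have [N HN] : exists N : nat, e^-1 < N%:R.
  by exists (Num.bound e^-1); apply: archi_boundP; rewrite invr_ge0 ltW.
exists N => n Nn.
have N0 : (0 : R) < N%:R by apply: lt_trans HN; rewrite invr_gt0.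
apply: (le_lt_trans (ler_wiXn2l r0 _ Nn)); first by apply: (le_trans r2); rewrite invf_le1 ?ler1n //.
have h1 : (r * 2) ^+ N <= 1 by apply: exprn_ile1; lra.
have h2 : (N%:R : R) <= 2 ^+ N by rewrite -natrX ler_nat ltnW // ltn_expl.
have h3 : r ^+ N * N%:R <= 1.
  apply: le_trans h1; rewrite exprMn ler_wpM2l // exprn_ge0 //.
have h4 : 1 < e * N%:R.
  by rewrite -[X in X < _](mulfV (lt0r_neq0 e0)) ltr_pM2l.
rewrite -(ltr_pM2r N0); exact: le_lt_trans h3 h4.
Qed.
Section Neumann.
Variables (R : realType) (A : algType R[i]) (sA : A -> A) (nA : A -> R).
Hypothesis HA : is_cstar_alg sA nA.

Let sAM x y : sA (x * y) = sA y * sA x. Proof. case: HA => _ [_ [H _]]; exact: H. Qed.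
Let sAK x : sA (sA x) = x. Proof. case: HA => _ [_ [_ [H _]]]; exact: H. Qed.
Let nge0 x : 0 <= nA x. Proof. case: HA => _ [_ [_ [_ [H _]]]]; exact: H. Qed.
Let neq0 x : nA x = 0 -> x = 0. Proof. case: HA => _ [_ [_ [_ [_ [H _]]]]]; exact: H. Qed.
Let nD x y : nA (x + y) <= nA x + nA y. Proof. case: HA => _ [_ [_ [_ [_ [_ [H _]]]]]]; exact: H. Qed.
Let nZ (c : R[i]) x : real_complex R (nA (c *: x)) = `|c| * real_complex R (nA x).
Proof. case: HA => _ [_ [_ [_ [_ [_ [_ [H _]]]]]]]; exact: H. Qed.
Let nM x y : nA (x * y) <= nA x * nA y. Proof. case: HA => _ [_ [_ [_ [_ [_ [_ [_ [H _]]]]]]]]; exact: H. Qed.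
Let nC x : nA (sA x * x) = nA x ^+ 2. Proof. case: HA => _ [_ [_ [_ [_ [_ [_ [_ [_ [H _]]]]]]]]]; exact: H. Qed.
Let ncomp := (let: conj _ (conj _ (conj _ (conj _ (conj _ (conj _ (conj _ (conj _ (conj _ (conj _ H))))))))) := HA in H).

Lemma nN x : nA (- x) = nA x.
Proof. by apply: complexI; rewrite -scaleN1r nZ normrN1 mul1r. Qed.

Lemma nA0 : nA 0 = 0.
Proof. by apply: complexI; rewrite -(scale0r 0) nZ normr0 mul0r. Qed.

Lemma nB x y : nA (x - y) = nA (y - x).
Proof. by rewrite -nN opprB. Qed.

Lemma nsum k (F : 'I_k -> A) : nA (\sum_(i < k) F i) <= \sum_(i < k) nA (F i).
Proof.
elim/big_rec2: _ => [|i y1 y2 _ Hy]; first by rewrite nA0.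
by apply: le_trans (nD _ _) _; rewrite lerD2l.
Qed.

Lemma sA1 : sA 1 = 1.
Proof. by have := sAM (sA 1) 1; rewrite mulr1 !sAK mulr1 => /esym. Qed.

Lemma nA1 : nA 1 <= 1.
Proof.
have h : nA 1 = nA 1 ^+ 2 by rewrite -nC sA1 mul1r.
have := nge0 1; rewrite expr2 in h; nra.
Qed.

Lemma npow x k : nA (x ^+ k) <= nA x ^+ k.
Proof.
elim: k => [|k IH]; first by rewrite !expr0 nA1.
rewrite !exprS; apply: le_trans (nM _ _) _; apply: ler_wpM2l => //.
Qed.

Lemma geo_le2 (r : R) k : 0 <= r -> r <= 2^-1 -> \sum_(i < k) r ^+ i <= 2.
Proof.
move=> r0 r2; elim: k => [|k IH]; first by rewrite big_ord0.
rewrite big_ord_recl expr0.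
under eq_bigr do rewrite exprS.
rewrite -mulr_sumr.
have s0 : 0 <= \sum_(i < k) r ^+ i by apply: sumr_ge0 => i _; apply: exprn_ge0.
nra.
Qed.

Lemma right_inv (a : A) : nA (1 - a) <= 2^-1 -> exists l, a * l = 1.
Proof.
set b := 1 - a => hb.
set r := nA b.
have r0 : 0 <= r by apply: nge0.
pose P k := \sum_(i < k) b ^+ i.
have PD n k : P (n + k)%N - P n = b ^+ n * \sum_(i < k) b ^+ i.
  rewrite /P big_split_ord /= addrC addrK mulr_sumr.
  by apply: eq_bigr => i _; rewrite exprD.
have PB n k : nA (P (n + k)%N - P n) <= r ^+ n * 2.
  rewrite PD; apply: le_trans (nM _ _) _.
  apply: ler_pM; [exact: nge0 | exact: nge0 | exact: npow |].
  apply: le_trans (nsum _) _; apply: le_trans (geo_le2 k r0 hb).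
  by apply: ler_sum => i _; apply: npow.
have [l Hl] : exists l, forall e : R, 0 < e -> exists N, forall n, (N <= n)%N ->
            nA (P n - l) < e.
  apply: ncomp => e e0.
  have e4 : 0 < e / 2 / 2 by rewrite !divr_gt0.
  have [N HN] := small_pow r0 hb e4.
  exists N => m n Nm Nn.
  wlog mn : m n Nm Nn / (n <= m)%N.
    move=> W; case/orP: (leq_total n m) => h; first exact: W.
    by rewrite nB; apply: W.
  rewrite -(subnKC mn); apply: le_lt_trans (PB _ _) _.
  have := HN n Nn; lra.
have key n : a * P n = 1 - b ^+ n.
  have := subrX1 b n; rewrite -/(P n).
  have -> : b - 1 = - a by rewrite /b addrAC subrr add0r.
  by rewrite mulNr => h; rewrite -[a * P n]opprK -h opprB.
exists l.
have bound : forall e : R, 0 < e -> nA (a * l - 1) < e * (nA a + 1).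
  move=> e e0.
  have [N1 H1] := Hl e e0.
  have [N2 H2] := small_pow r0 hb e0.
  pose n := maxn N1 N2.
  have h1 := H1 n (leq_maxl _ _).
  have h2 := H2 n (leq_maxr _ _).
  have -> : a * l - 1 = a * (l - P n) - b ^+ n.
    by rewrite mulrBr key opprB addrA addrAC addrK.
  apply: le_lt_trans (nD _ _) _; rewrite nN.
  have h3 : nA (a * (l - P n)) <= nA a * e.
    apply: le_trans (nM _ _) _; rewrite nB; apply: ler_wpM2l => //; exact: ltW.
  have h4 := npow b n.
  rewrite -/r in h4.
  have := nge0 a; lra.
apply/eqP; rewrite -subr_eq0; apply/eqP; apply: neq0.
have x0 := nge0 (a * l - 1).
have a0 := nge0 a.
case: (ltrgtP (nA (a * l - 1)) 0) => //; first by move=> h; exfalso; lra.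
move=> xpos; exfalso.
have q : 0 < nA a + 1 by lra.
have := bound (nA (a * l - 1) / (nA a + 1)) (divr_gt0 xpos q).
by rewrite divfK ?lt_irreflexive // gt_eqF.
Qed.
End Neumann.
Lemma add_morph0 (U V : zmodType) (f : U -> V) :
  (forall x y, f (x + y) = f x + f y) -> f 0 = 0.
Proof. by move=> fD; apply/eqP; rewrite -(addrI (f 0) (_ : f 0 + f 0 = f 0 + 0)) // addr0 -fD addr0. Qed.

Lemma add_morph_sum (U V : zmodType) (f : U -> V) (I : Type) (r : seq I) (F : I -> U) :
  (forall x y, f (x + y) = f x + f y) -> f (\sum_(i <- r) F i) = \sum_(i <- r) f (F i).
Proof. by move=> fD; apply: (big_morph f fD (add_morph0 fD)). Qed.

Section Main.
Variables (R : realType) (A : algType R[i]) (sA : A -> A)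
    (X : lmodType R[i]) (act : X -> A -> X) (ip : X -> X -> A)
    (O : algType R[i]) (sO : O -> O) (iota : A -> O) (S : X -> O).
Hypotheses (sOD : forall x y, sO (x + y) = sO x + sO y)
  (sOM : forall x y, sO (x * y) = sO y * sO x) (sOK : forall x, sO (sO x) = x)
  (sAK : forall x, sA (sA x) = x)
  (iotaD : forall x y, iota (x + y) = iota x + iota y)
  (iotaZ : forall (c : R[i]) x, iota (c *: x) = c *: iota x)
  (iotaM : forall x y, iota (x * y) = iota x * iota y)
  (iotaS : forall x, iota (sA x) = sO (iota x)) (iota1 : iota 1 = 1)
  (SD : forall x y, S (x + y) = S x + S y)
  (Sact : forall x a, S (act x a) = S x * iota a)
  (SS : forall x y, sO (S x) * S y = iota (ip x y))
  (ipsym : forall x y, sA (ip x y) = ip y x).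

Definition comm t := forall a, iota a * t = t * iota a.

Lemma S_basis m (v : 'I_m -> X) (Hv : is_basis act ip v) x :
  \sum_(j < m) S (v j) * iota (ip (v j) x) = S x.
Proof.
rewrite {2}(Hv x) (add_morph_sum _ _ SD); apply: eq_bigr => j _; by rewrite Sact.
Qed.

Lemma L1 m (v : 'I_m -> X) (Hv : is_basis act ip v) t (ht : comm t) x :
  sigma sO S v t * S x = S x * t.
Proof.
rewrite /sigma mulr_suml.
transitivity (\sum_(j < m) S (v j) * iota (ip (v j) x) * t); last by rewrite -mulr_suml S_basis.
by apply: eq_bigr => j _; rewrite -!mulrA SS -ht.
Qed.

Lemma sOsum I (r : seq I) (F : I -> O) : sO (\sum_(i <- r) F i) = \sum_(i <- r) sO (F i).
Proof. exact: add_morph_sum. Qed.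

Lemma sigma_star n (u : 'I_n -> X) t : sigma sO S u (sO t) = sO (sigma sO S u t).
Proof.
rewrite /sigma sOsum; apply: eq_bigr => i _; by rewrite !sOM sOK mulrA.
Qed.

Lemma comm_star t : comm t -> comm (sO t).
Proof.
move=> ht a; by rewrite -[a]sAK iotaS -!sOM ht.
Qed.

Lemma L2 n (u : 'I_n -> X) (Hu : is_basis act ip u) t (ht : comm t) x :
  sO (S x) * sigma sO S u t = t * sO (S x).
Proof.
rewrite -[sigma _ _ _ t]sOK -sigma_star -sOM L1 //; last exact: comm_star.
by rewrite sOM sOK.
Qed.


Lemma sigma_add n (u : 'I_n -> X) s t :
  sigma sO S u (s + t) = sigma sO S u s + sigma sO S u t.
Proof. rewrite /sigma -big_split; apply: eq_bigr => i _ /=; by rewrite mulrDr mulrDl. Qed.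

Lemma sigma_sub n (u : 'I_n -> X) s t :
  sigma sO S u (s - t) = sigma sO S u s - sigma sO S u t.
Proof. rewrite /sigma -sumrB; apply: eq_bigr => i _ /=; by rewrite mulrBr mulrBl. Qed.

Lemma sigma_scale n (u : 'I_n -> X) (c : R[i]) t :
  sigma sO S u (c *: t) = c *: sigma sO S u t.
Proof. rewrite /sigma scaler_sumr; apply: eq_bigr => i _ /=; by rewrite -scalerAr -scalerAl. Qed.

Lemma sigma_mul n (u : 'I_n -> X) (Hu : is_basis act ip u) s t (hs : comm s) :
  sigma sO S u (s * t) = sigma sO S u s * sigma sO S u t.
Proof.
rewrite {3}/sigma mulr_sumr; apply: eq_bigr => j _; by rewrite !mulrA L1.
Qed.

Lemma sigma_one n (u : 'I_n -> X) (Su1 : \sum_(i < n) S (u i) * sO (S (u i)) = 1) :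
  sigma sO S u 1 = 1.
Proof. rewrite /sigma; under eq_bigr do rewrite mulr1; exact: Su1. Qed.

Lemma sigma_indep n (u : 'I_n -> X) (Su1 : \sum_(i < n) S (u i) * sO (S (u i)) = 1)
  m (v : 'I_m -> X) (Hv : is_basis act ip v) t (ht : comm t) :
  sigma sO S v t = sigma sO S u t.
Proof.
rewrite -[sigma _ _ v t]mulr1 -Su1 mulr_sumr; apply: eq_bigr => j _; by rewrite mulrA L1.
Qed.

Lemma sigma_inj n (u : 'I_n -> X) (Hu : is_basis act ip u)
  (hfull : exists (sq : seq (R[i] * X * X)) (l : A),
     (\sum_(q <- sq) q.1.1 *: ip q.1.2 q.2) * l = 1)
  s t (hs : comm s) (ht : comm t) :
  sigma sO S u s = sigma sO S u t -> s = t.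
Proof.
move=> e; apply/eqP; rewrite -subr_eq0; apply/eqP.
set d := s - t.
have hd : comm d by move=> a; rewrite /d mulrBr mulrBl hs ht.
have sd : sigma sO S u d = 0 by rewrite /d sigma_sub e subrr.
have h1 x : d * sO (S x) = 0 by rewrite -(L2 Hu hd) sd mulr0.
have h2 x y : d * iota (ip x y) = 0 by rewrite -SS mulrA h1 mul0r.
case: hfull => sq [l hl].
rewrite -[d]mulr1 -iota1 -hl iotaM mulrA (add_morph_sum _ _ iotaD) mulr_sumr big1 ?mul0r //.
move=> q _; by rewrite iotaZ -scalerAr h2 scaler0.
Qed.

End Main.

Theorem lemma3p1 (R : realType)
    (A : algType R[i]) (sA : A -> A) (nA : A -> R)
    (X : lmodType R[i]) (act : X -> A -> X) (ip : X -> X -> A) (phi : A -> X -> X)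
    (n : nat) (u : 'I_n -> X)
    (O : algType R[i]) (sO : O -> O) (nO : O -> R) (iota : A -> O) (S : X -> O) :
  is_cstar_alg sA nA ->
  is_hilbert_bimodule sA nA act ip phi ->
  full nA ip ->
  is_basis act ip u ->
  is_OX sA act ip phi u sO nO iota S ->
  (* sigma restricted to A' is a unital injective *-homomorphism *)
  ((forall s t, in_commutant iota s -> in_commutant iota t ->
       sigma sO S u (s + t) = sigma sO S u s + sigma sO S u t) /\
   (forall (c : R[i]) t, in_commutant iota t ->
       sigma sO S u (c *: t) = c *: sigma sO S u t) /\
   (forall s t, in_commutant iota s -> in_commutant iota t ->
       sigma sO S u (s * t) = sigma sO S u s * sigma sO S u t) /\
   (forall t, in_commutant iota t -> sigma sO S u (sO t) = sO (sigma sO S u t)) /\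
   sigma sO S u 1 = 1 /\
   (forall s t, in_commutant iota s -> in_commutant iota t ->
       sigma sO S u s = sigma sO S u t -> s = t)) /\
  (* and it does not depend on the choice of the basis *)
  (forall (m : nat) (v : 'I_m -> X), is_basis act ip v ->
     forall t, in_commutant iota t -> sigma sO S v t = sigma sO S u t).
Proof.
move=> HA [HM HL] Hfull Hu [HO Hrel _ _].
case: Hrel => -[iotaD iotaZ iotaM iotaS iota1] [SD [SZ [Sact [Sphi [SS Su1]]]]].
have sOD : forall x y, sO (x + y) = sO x + sO y by case: HO => H _; exact: H.
have sOM : forall x y, sO (x * y) = sO y * sO x by case: HO => _ [_ [H _]]; exact: H.
have sOK : forall x, sO (sO x) = x by case: HO => _ [_ [_ [H _]]]; exact: H.
have sAK : forall x, sA (sA x) = x by case: HA => _ [_ [_ [H _]]]; exact: H.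
have ipsym : forall x y, sA (ip x y) = ip y x.
  by case: HM => _ [_ [_ [_ [_ [_ [_ [_ [H _]]]]]]]]; exact: H.
have hfull : exists (sq : seq (R[i] * X * X)) (l : A),
     (\sum_(q <- sq) q.1.1 *: ip q.1.2 q.2) * l = 1.
  have h2 : (0 : R) < 2^-1 by rewrite invr_gt0.
  have [sq hsq] := Hfull 1 _ h2.
  have [l hl] := right_inv HA (ltW hsq).
  by exists sq, l.
split; [split; [|split; [|split; [|split; [|split]]]] | ].
- by move=> s t _ _; apply: sigma_add.
- by move=> c t _; apply: sigma_scale.
- by move=> s t hs _; apply: sigma_mul.
- by move=> t _; apply: sigma_star.
- by apply: sigma_one.
- move=> s t hs ht e; exact: (sigma_inj sOD sOM sOK sAK iotaD iotaZ iotaM iotaS iota1 SD Sact SS Hu hfull hs ht e).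
- by move=> m v Hv t ht; exact: (sigma_indep SD Sact SS Su1 Hv ht).
Qed.
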